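(* Let $X$ be a Banach space, $B$ an admissible Banach sequence space over $\mathbb{Z}$, and $(A_n)_{n\in\mathbb{Z}}$ a sequence of invertible bounded linear operators on $X$ with $\sup_n\lVert A_n\rVert<\infty$ admitting an exponential dichotomy. Then the linear system $x_{n+1}=A_nx_n$, $n\in\mathbb{Z}$, has the $B$-Lipschitz shadowing property: there is $L>0$ such that for every $\varepsilon>0$ and every sequence $(y_n)_{n\in\mathbb{Z}}\subset X$ with $(y_{n+1}-A_ny_n)_{n\in\mathbb{Z}}\in X_B$ and $\lVert(y_{n+1}-A_ny_n)_{n\in\mathbb{Z}}\rVert_B\le L\varepsilon$, there exists $(x_n)_{n\in\mathbb{Z}}$ with $x_{n+1}=A_nx_n$ for all $n$, $(x_n-y_n)_{n\in\mathbb{Z}}\in X_B$ and $\lVert(x_n-y_n)_{n\in\mathbb{Z}}\rVert_B\le\varepsilon$. Furthermore, for each $\varepsilon>0$, the sequence $(x_n)_{n\in\mathbb{Z}}$ satisfying $x_{n+1}=A_nx_n$ for all $n$ and $\lVert(x_n-y_n)_{n\in\mathbb{Z}}\rVert_B\le\varepsilon$ is unique.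
   Context: A normed sequence space over $\mathbb{Z}$ is a linear subspace $B$ of the space of real sequences $\mathbf s=(s_n)_{n\in\mathbb{Z}}$ with a norm $\lVert\cdot\rVert_B$ such that if $\mathbf s'\in B$ and $|s_n|\le|s'_n|$ for all $n$ then $\mathbf s\in B$ and $\lVert\mathbf s\rVert_B\le\lVert\mathbf s'\rVert_B$; a Banach sequence space if complete. Admissible: each $\chi_{\{n\}}\in B$ with $\lVert\chi_{\{n\}}\rVert_B>0$, and $B$ is invariant under shifts $(s_n)\mapsto(s_{n+m})$ with equal norms; assume $\lVert\chi_{\{0\}}\rVert_B=1$. $X_B$ is the set of sequences $(x_n)\subset X$ with $(\lVert x_n\rVert)\in B$, normed by $\lVert\mathbf x\rVert_B=\lVert(\lVert x_n\rVert)_n\rVert_B$. Exponential dichotomy: with $\mathcal A(m,n)=A_{m-1}\cdots A_n$ ($m>n$), $\mathrm{Id}$ ($m=n$), $A_m^{-1}\cdots A_{n-1}^{-1}$ ($m<n$), there exist projections $P_m$ with $P_{m+1}A_m=A_mP_m$ and $C,\lambda>0$ with $\lVert\mathcal A(m,n)P_n\rVert\le Ce^{-\lambda(m-n)}$ ($m\ge n$) and $\lVert\mathcal A(m,n)(\mathrm{Id}-P_n)\rVert\le Ce^{-\lambda(n-m)}$ ($m\le n$). *)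

(* Defs.v *)
From HB Require Import structures.
From mathcomp Require Import all_boot all_order all_algebra.
From mathcomp Require Import all_classical all_reals all_analysis.
Set Implicit Arguments. Unset Strict Implicit. Unset Printing Implicit Defensive.
Import Order.TTheory GRing.Theory Num.Theory.
Import numFieldNormedType.Exports.
Local Open Scope ring_scope.

(* Real sequences indexed by Z are functions int -> R.
   A normed sequence space is given by a carrier predicate B and a
   function normB, meaningful on B. *)

Definition is_linear_op (R : realType) (X : normedModType R) (T : X -> X) :=
  forall (a : R) (x y : X), T (a *: x + y) = a *: T x + T y.

Definition is_bounded_op (R : realType) (X : normedModType R) (T : X -> X) :=
  exists M : R, forall x : X, `|T x| <= M * `|x|.

Definition normed_seq_space (R : realType) (B : set (int -> R))
    (normB : (int -> R) -> R) :=
  [/\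
      (B (fun _ => 0) /\
      (forall s t, B s -> B t -> B (fun n => s n + t n)) /\
      (forall (c : R) s, B s -> B (fun n => c * s n))),
      (forall s t, B s -> B t -> normB (fun n => s n + t n) <= normB s + normB t),
      (forall (c : R) s, B s -> normB (fun n => c * s n) = `|c| * normB s),
      (forall s, B s -> normB s = 0 -> s = (fun _ => 0)) &
      (forall s s', B s' -> (forall n, `|s n| <= `|s' n|) ->
         B s /\ normB s <= normB s')].

Definition seq_space_complete (R : realType) (B : set (int -> R))
    (normB : (int -> R) -> R) :=
  forall u : nat -> (int -> R), (forall k, B (u k)) ->
    (forall e : R, 0 < e -> exists N : nat, forall k l : nat, (N <= k)%N -> (N <= l)%N ->
        normB (fun n => u k n - u l n) < e) ->
    exists s, B s /\ forall e : R, 0 < e -> exists N : nat, forall k : nat, (N <= k)%N ->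
        normB (fun n => u k n - s n) < e.

Definition banach_seq_space (R : realType) (B : set (int -> R))
    (normB : (int -> R) -> R) :=
  normed_seq_space B normB /\ seq_space_complete B normB.

Definition chi1 (R : realType) (m : int) : int -> R :=
  fun n => if n == m then 1 else 0.

Definition admissible (R : realType) (B : set (int -> R))
    (normB : (int -> R) -> R) :=
  [/\ (forall m, B (chi1 R m) /\ 0 < normB (chi1 R m)),
      (forall s (m : int), B s -> B (fun n => s (n + m)) /\
                             normB (fun n => s (n + m)) = normB s) &
      normB (chi1 R 0) = 1].

(* X_B membership of an X-valued sequence, via the sequence of norms *)
Definition inXB (R : realType) (X : normedModType R) (B : set (int -> R))
    (x : int -> X) := B (fun n => `|x n|).
Definition normXB (R : realType) (X : normedModType R)
    (normB : (int -> R) -> R) (x : int -> X) := normB (fun n => `|x n|).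

Fixpoint fwd_prod (R : realType) (X : normedModType R) (A : int -> X -> X)
    (k : nat) (n : int) : X -> X :=
  match k with
  | 0%N => id
  | k'.+1 => fun x => A (n + k'%:Z) (fwd_prod A k' n x)
  end.
Fixpoint bwd_prod (R : realType) (X : normedModType R) (Ainv : int -> X -> X)
    (k : nat) (n : int) : X -> X :=
  match k with
  | 0%N => id
  | k'.+1 => fun x => Ainv (n - k'.+1%:Z) (bwd_prod Ainv k' n x)
  end.
Definition cocycle (R : realType) (X : normedModType R) (A Ainv : int -> X -> X)
    (m n : int) : X -> X :=
  if n <= m then fwd_prod A (absz (m - n)) n else bwd_prod Ainv (absz (n - m)) n.

Definition exp_dichotomy (R : realType) (X : normedModType R) (A Ainv : int -> X -> X) :=
  exists (P : int -> X -> X) (C lam : R),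
    [/\ (forall n, is_linear_op (P n) /\ is_bounded_op (P n) /\
                   (forall x, P n (P n x) = P n x)),
        (forall m x, P (m + 1) (A m x) = A m (P m x)),
        0 < C /\ 0 < lam,
        (forall m n x, n <= m ->
            `|cocycle A Ainv m n (P n x)| <= C * expR (- lam * (m - n)%:~R) * `|x|) &
        (forall m n x, m <= n ->
            `|cocycle A Ainv m n (x - P n x)| <= C * expR (- lam * (n - m)%:~R) * `|x|)].

(* Main.v *)
Require Import Defs.
From HB Require Import structures.
From mathcomp Require Import all_boot all_order all_algebra.
From mathcomp Require Import all_classical all_reals all_analysis.
From mathcomp Require Import zify ring lra.
Import Order.TTheory GRing.Theory Num.Theory.
Import numFieldNormedType.Exports.
Local Open Scope ring_scope.
Local Open Scope classical_set_scope.

Section Lin.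
Variables (R : realType) (X : normedModType R) (T : X -> X).
Hypothesis hT : is_linear_op T.
Lemma T0 : T 0 = 0.
Proof. have h := hT 1 0 0; rewrite !scale1r addr0 in h. by apply: (addrI (T 0)); rewrite addr0 -h. Qed.
Lemma TD x y : T (x + y) = T x + T y.
Proof. by rewrite -[x in LHS]scale1r hT scale1r. Qed.
Lemma TN x : T (- x) = - T x.
Proof. by have := hT (-1) x 0; rewrite addr0 T0 addr0 !scaleN1r. Qed.
Lemma TB x y : T (x - y) = T x - T y.
Proof. by rewrite TD TN. Qed.
Lemma Tsum (F : nat -> X) m N : T (\sum_(m <= j < N) F j) = \sum_(m <= j < N) T (F j).
Proof. by apply: (big_morph T TD T0). Qed.

Lemma lin_cvg (M : R) : (forall x, `|T x| <= M * `|x|) ->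
  forall (u : nat -> X) l, (u @ \oo --> l)%classic -> ((fun k => T (u k)) @ \oo --> T l)%classic.
Proof.
move=> hM u l /cvgrPdist_lt ul; apply/cvgrPdist_lt => e he.
have M1 : 0 < `|M| + 1 by rewrite ltr_pwDr // normr_ge0.
have := ul (e / (`|M| + 1)) (divr_gt0 he M1).
apply: filterS => k hk.
rewrite -TB; apply: le_lt_trans (hM _) _.
apply: (@le_lt_trans _ _ ((`|M| + 1) * `|l - u k|)).
  apply: ler_wpM2r; first exact: normr_ge0.
  by apply: le_trans (ler_norm M) _; rewrite lerDl.
by rewrite mulrC -ltr_pdivlMr.
Qed.
End Lin.
Arguments T0 {R X T} hT.
Arguments TD {R X T} hT x y.
Arguments TN {R X T} hT x.
Arguments TB {R X T} hT x y.
Arguments Tsum {R X T} hT F m N.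
Arguments lin_cvg {R X T} hT M _ u l _.

Section Main.
Variables (R : realType) (B : set (int -> R)) (normB : (int -> R) -> R).
Hypothesis hB : banach_seq_space B normB.
Hypothesis hadm : admissible B normB.

Let nss := proj1 hB.
Lemma B0 : B (fun _ => 0). Proof. by case: nss => [[]]. Qed.
Lemma BD {s t} : B s -> B t -> B (fun n => s n + t n). Proof. by case: nss => [[_ [H _]]] *; apply: H. Qed.
Lemma BZ c {s} : B s -> B (fun n => c * s n). Proof. by case: nss => [[_ [_ H]]] *; apply: H. Qed.
Lemma nBD {s t} : B s -> B t -> normB (fun n => s n + t n) <= normB s + normB t.
Proof. by case: nss => _ H *; apply: H. Qed.
Lemma nBZ c {s} : B s -> normB (fun n => c * s n) = `|c| * normB s.
Proof. by case: nss => _ _ H *; apply: H. Qed.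
Lemma Bsolid s s' : B s' -> (forall n, `|s n| <= `|s' n|) -> B s /\ normB s <= normB s'.
Proof. by case: nss => _ _ _ _; apply. Qed.
Lemma Bshift s m : B s -> B (fun n => s (n + m)) /\ normB (fun n => s (n + m)) = normB s.
Proof. by case: hadm => _ H _; apply: H. Qed.

Lemma BN {s} : B s -> B (fun n => - s n).
Proof. move=> /(BZ (-1)); by under eq_fun do rewrite mulN1r. Qed.
Lemma nBN {s} : B s -> normB (fun n => - s n) = normB s.
Proof. move=> Bs; have := nBZ (-1) Bs; under eq_fun do rewrite mulN1r.
by rewrite normrN normr1 mul1r. Qed.
Lemma BB {s t} : B s -> B t -> B (fun n => s n - t n).
Proof. by move=> Bs Bt; apply: BD => //; apply: BN. Qed.
Lemma nB0 : normB (fun _ => 0) = 0.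
Proof. have := nBZ 0 B0; under eq_fun do rewrite mul0r. by rewrite normr0 mul0r. Qed.
Lemma nB_ge0 {s} : B s -> 0 <= normB s.
Proof. move=> Bs; have := nBD Bs (BN Bs); under eq_fun do rewrite subrr.
rewrite nB0 nBN //; lra. Qed.

Lemma nchi1 m : B (chi1 R m) /\ normB (chi1 R m) = 1.
Proof.
case: hadm => H1 H2 H3; split; first by case: (H1 m).
rewrite -H3; have [_ <-] := H2 _ (- m) (proj1 (H1 0)).
congr normB; apply/funext => n; rewrite /chi1.
by rewrite subr_eq0.
Qed.

Lemma B_sup s m : B s -> `|s m| <= normB s.
Proof.
move=> Bs; have [Bc nc] := nchi1 m.
have := @Bsolid (fun n => s m * chi1 R m n) _ Bs.
rewrite nBZ // nc mulr1 => H; apply: (proj2 (H _)) => n.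
rewrite /chi1; case: eqP => [->|_]; rewrite ?mulr1 ?mulr0 ?normr0 //.
Qed.

Lemma B_le s s' : B s' -> (forall n, 0 <= s n <= s' n) -> B s /\ normB s <= normB s'.
Proof. move=> Bs' H; apply: Bsolid => // n; have /andP[h1 h2] := H n.
by rewrite !ger0_norm //; lra. Qed.

Lemma Bsum (F : nat -> int -> R) : (forall j, B (F j)) -> forall m N,
  B (fun n => \sum_(m <= j < m + N) F j n) /\
  normB (fun n => \sum_(m <= j < m + N) F j n) <= \sum_(m <= j < m + N) normB (F j).
Proof.
move=> BF m; elim=> [|N [IH1 IH2]].
  under eq_fun do rewrite addn0 big_geq //.
  rewrite addn0 big_geq // nB0 //; split=> //; exact: B0.
have E : (fun n => \sum_(m <= j < m + N.+1) F j n) =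
   (fun n => \sum_(m <= j < m + N) F j n + F (m + N)%N n).
  by apply/funext => n; rewrite addnS big_nat_recr //= leq_addr.
rewrite E addnS big_nat_recr ?leq_addr //=; split; first exact: BD.
apply: le_trans (nBD IH1 (BF _)) _; by rewrite lerD2r.
Qed.


Lemma Blim (u : nat -> int -> R) (b : nat -> R) :
  (forall k, B (u k)) ->
  (forall k l, (k <= l)%N -> normB (fun n => u l n - u k n) <= b k) ->
  (forall e, 0 < e -> exists N, forall k, (N <= k)%N -> b k < e) ->
  exists s, B s /\ forall e, 0 < e -> exists N : nat, forall k, (N <= k)%N ->
     normB (fun n => u k n - s n) < e.
Proof.
move=> Bu Hu Hb; case: hB => _ hc; apply: hc => // e he.
have [N HN] := Hb e he; exists N => k l Hk Hl.
case: (leqP k l) => kl.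
  have -> : (fun n => u k n - u l n) = (fun n => - (u l n - u k n)).
    by apply/funext => n; rewrite opprB.
  rewrite nBN; last exact: BB.
  exact: le_lt_trans (Hu k l kl) (HN k Hk).
exact: le_lt_trans (Hu l k (ltnW kl)) (HN l Hl).
Qed.



Variables (X : completeNormedModType R) (A Ainv P : int -> X -> X)
  (C lam : R) (MA MAi : int -> R).
Hypothesis hA : forall n, is_linear_op (A n).
Hypothesis hAi : forall n, is_linear_op (Ainv n).
Hypothesis hP : forall n, is_linear_op (P n).
Hypothesis hAM : forall n x, `|A n x| <= MA n * `|x|.
Hypothesis hAiM : forall n x, `|Ainv n x| <= MAi n * `|x|.
Hypothesis hAA : forall n x, Ainv n (A n x) = x.
Hypothesis hAA' : forall n x, A n (Ainv n x) = x.
Hypothesis hPA : forall m x, P (m + 1) (A m x) = A m (P m x).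
Hypothesis hC : 0 < C.
Hypothesis hlam : 0 < lam.
Hypothesis hst : forall m n x, n <= m ->
  `|cocycle A Ainv m n (P n x)| <= C * expR (- lam * (m - n)%:~R) * `|x|.
Hypothesis hun : forall m n x, m <= n ->
  `|cocycle A Ainv m n (x - P n x)| <= C * expR (- lam * (n - m)%:~R) * `|x|.

Let q := expR (- lam).
Lemma q_gt0 : 0 < q. Proof. exact: expR_gt0. Qed.
Lemma q_lt1 : q < 1. Proof. by rewrite /q expR_lt1 oppr_lt0. Qed.
Lemma eexp k : expR (- lam * (k%:Z)%:~R) = q ^+ k.
Proof. by rewrite -pmulrn mulrC expRM_natl. Qed.

Lemma q_small e : 0 < e -> exists N : nat, forall k, (N <= k)%N -> q ^+ k < e.
Proof.
move=> he; have : `|q| < 1 by rewrite gtr0_norm ?q_gt0 // q_lt1.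
move/cvg_expr/cvgrPdist_lt/(_ e he) => [N _ HN]; exists N => k /HN /=.
by rewrite sub0r normrN gtr0_norm // exprn_gt0 // q_gt0.
Qed.

Lemma cocF n (j : nat) : cocycle A Ainv n (n - j%:Z) = fwd_prod A j (n - j%:Z).
Proof.
rewrite /cocycle ifT; last by rewrite lerBlDr lerDl.
by rewrite opprB addrC subrK absz_nat.
Qed.

Lemma cocB n (j : nat) : cocycle A Ainv n (n + j%:Z) = bwd_prod Ainv j (n + j%:Z).
Proof.
case: j => [|j].
  have -> : n + (0%N)%:Z = n by rewrite addr0.
  by rewrite /cocycle lexx subrr.
rewrite /cocycle.
rewrite ifF; last by apply/negbTE; rewrite -ltNge ltrDl.
by rewrite addrC addKr absz_nat.
Qed.


Section Uniq.
Variable w : int -> X.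
Hypothesis hw : forall n, w (n + 1) = A n (w n).

Lemma Lfwd m (k : nat) : fwd_prod A k m (P m (w m)) = P (m + k%:Z) (w (m + k%:Z)).
Proof.
elim: k => [|k IH] /=; first by rewrite addr0.
rewrite IH -hPA -hw.
by have -> : m + k.+1%:Z = m + k%:Z + 1 by lia.
Qed.

Lemma Lbwd m (k : nat) : bwd_prod Ainv k m (w m - P m (w m)) =
   w (m - k%:Z) - P (m - k%:Z) (w (m - k%:Z)).
Proof.
elim: k => [|k IH] /=; first by rewrite subr0.
rewrite IH.
have -> : m - k%:Z = (m - k.+1%:Z) + 1 by lia.
by rewrite hw hPA -(TB (hA _)) hAA.
Qed.

Lemma uniq0 (W : R) : (forall n, `|w n| <= W) -> forall n, w n = 0.
Proof.
move=> hW n.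
have W0 : 0 <= W by apply: le_trans (hW 0) ; exact: normr_ge0.
have Hk : forall k : nat, `|w n| <= C * q ^+ k * W + C * q ^+ k * W.
  move=> k.
  have -> : w n = P n (w n) + (w n - P n (w n)) by rewrite addrC subrK.
  apply: le_trans (ler_normD _ _) _; apply: lerD.
    have := Lfwd (n - k%:Z) k; rewrite subrK => <-.
    have hk : n - k%:Z <= n by rewrite lerBlDr lerDl.
    rewrite -cocF; apply: le_trans (hst _ _ _ hk) _.
    rewrite opprB addrC subrK eexp; apply: ler_wpM2l; last exact: hW.
    by apply: mulr_ge0; [exact: ltW | apply: exprn_ge0; exact: ltW q_gt0].
  have := Lbwd (n + k%:Z) k; rewrite addrK => <-.
  have hk : n <= n + k%:Z by rewrite lerDl.
  rewrite -cocB; apply: le_trans (hun _ _ _ hk) _.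
  rewrite addrC addKr eexp; apply: ler_wpM2l; last exact: hW.
  by apply: mulr_ge0; [exact: ltW | apply: exprn_ge0; exact: ltW q_gt0].
apply/eqP; rewrite -normr_eq0 eq_le normr_ge0 andbT.
apply/ler_addgt0Pr => e he; rewrite add0r.
have W1 : 0 < 2 * C * W + 1 by rewrite ltr_pwDr // !mulr_ge0 // ltW.
have [N HN] := q_small _ (divr_gt0 he W1).
have qN := HN N (leqnn N).
apply: le_trans (Hk N) _.
have q0 : 0 <= q ^+ N by apply: exprn_ge0; exact: ltW q_gt0.
rewrite ltr_pdivlMr // in qN.
have : q ^+ N * (2 * C * W) <= q ^+ N * (2 * C * W + 1) by rewrite ler_wpM2l // lerDl.
nra.
Qed.
End Uniq.


Lemma bwdS k m x : bwd_prod Ainv k.+1 m x = Ainv (m - k.+1%:Z) (bwd_prod Ainv k m x).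
Proof. by []. Qed.
Lemma fwdS k m x : fwd_prod A k.+1 m x = A (m + k%:Z) (fwd_prod A k m x).
Proof. by []. Qed.

Section Exist.
Variables (G : int -> X) (Ga : R).
Hypothesis hG : forall n, `|G n| <= Ga.

Definition Sx n (j : nat) := fwd_prod A j (n - j%:Z) (P (n - j%:Z) (- G (n - j%:Z - 1))).
Definition Ux n (j : nat) := bwd_prod Ainv j.+1 (n + j.+1%:Z)
   (G (n + j%:Z) - P (n + j.+1%:Z) (G (n + j%:Z))).

Lemma Ga0 : 0 <= Ga. Proof. by apply: le_trans (hG 0); exact: normr_ge0. Qed.
Lemma qj0 (j : nat) : 0 <= q ^+ j. Proof. by apply: exprn_ge0; exact: ltW q_gt0. Qed.

Lemma Sx_bound n j : `|Sx n j| <= C * q ^+ j * `|G (n - j%:Z - 1)|.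
Proof.
have hk : n - j%:Z <= n by rewrite lerBlDr lerDl.
rewrite /Sx -cocF; apply: le_trans (hst _ _ _ hk) _.
by rewrite opprB addrC subrK eexp normrN.
Qed.

Lemma Ux_bound n j : `|Ux n j| <= C * q ^+ j * `|G (n + j%:Z)|.
Proof.
have hk : n <= n + j.+1%:Z by rewrite lerDl.
rewrite /Ux -cocB; apply: le_trans (hun _ _ _ hk) _.
rewrite addrC addKr eexp exprS.
apply: ler_wpM2r; first exact: normr_ge0.
apply: ler_wpM2l; first exact: ltW.
have := qj0 j; have := q_lt1; nra.
Qed.

Lemma Sx_cvg n : cvgn (series (Sx n)).
Proof.
apply: normed_cvg; apply: (@series_le_cvg _ _ (geometric (C * Ga) q)).
- move=> k; exact: normr_ge0.
- move=> k; rewrite /geometric /=; apply: mulr_ge0 (qj0 k).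
  by apply: mulr_ge0 Ga0; exact: ltW.
- move=> k; apply: le_trans (Sx_bound n k) _; rewrite /geometric /=.
  rewrite [C * Ga * _]mulrAC; apply: ler_wpM2l; first by apply: mulr_ge0 (qj0 k); exact: ltW.
  exact: hG.
- apply: is_cvg_geometric_series; rewrite gtr0_norm ?q_gt0 //; exact: q_lt1.
Qed.

Lemma Ux_cvg n : cvgn (series (Ux n)).
Proof.
apply: normed_cvg; apply: (@series_le_cvg _ _ (geometric (C * Ga) q)).
- move=> k; exact: normr_ge0.
- move=> k; rewrite /geometric /=; apply: mulr_ge0 (qj0 k).
  by apply: mulr_ge0 Ga0; exact: ltW.
- move=> k; apply: le_trans (Ux_bound n k) _; rewrite /geometric /=.
  rewrite [C * Ga * _]mulrAC; apply: ler_wpM2l; first by apply: mulr_ge0 (qj0 k); exact: ltW.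
  exact: hG.
- apply: is_cvg_geometric_series; rewrite gtr0_norm ?q_gt0 //; exact: q_lt1.
Qed.


Lemma Sx_S n j : Sx (n + 1) j.+1 = A n (Sx n j).
Proof.
rewrite /Sx fwdS.
have -> : n + 1 - j.+1%:Z = n - j%:Z by lia.
by rewrite subrK.
Qed.

Lemma Sx_0 n : Sx (n + 1) 0 = - P (n + 1) (G n).
Proof. by rewrite /Sx /= subr0 addrK (TN (hP _)). Qed.

Lemma series_Sx n N : series (Sx (n + 1)) N.+1 = A n (series (Sx n) N) - P (n + 1) (G n).
Proof.
rewrite !seriesEnat /= big_nat_recl // Sx_0 addrC (Tsum (hA n)).
by under eq_bigr do rewrite Sx_S.
Qed.

Lemma Ux_S n j : Ux n j.+1 = Ainv n (Ux (n + 1) j).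
Proof.
rewrite /Ux.
have -> : n + j.+2%:Z = n + 1 + j.+1%:Z by lia.
have -> : n + j.+1%:Z = n + 1 + j%:Z by lia.
rewrite [LHS]bwdS.
by have -> : n + 1 + j.+1%:Z - j.+2%:Z = n by lia.
Qed.

Lemma Ux_0 n : Ux n 0 = Ainv n (G n - P (n + 1) (G n)).
Proof.
rewrite /Ux bwdS /=.
have -> : n + 1%:Z - 1%:Z = n by lia.
by have -> : n + 0%:Z = n by lia.
Qed.

Lemma series_Ux n N : series (Ux n) N.+1 =
  Ainv n ((G n - P (n + 1) (G n)) + series (Ux (n + 1)) N).
Proof.
rewrite !seriesEnat /= big_nat_recl // Ux_0 [RHS](TD (hAi n)) (Tsum (hAi n)).
by under eq_bigr do rewrite Ux_S.
Qed.

Definition stab n := limn (series (Sx n)).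
Definition unst n := limn (series (Ux n)).

Lemma stab_rec n : stab (n + 1) = A n (stab n) - P (n + 1) (G n).
Proof.
have h1 : series (Sx (n + 1)) @ \oo --> stab (n + 1) by exact: Sx_cvg.
rewrite -cvg_shiftS in h1.
have E : [sequence series (Sx (n + 1)) N.+1]_N =
   (fun N => A n (series (Sx n) N) - P (n + 1) (G n)).
  by apply/funext => N /=; rewrite series_Sx.
rewrite E in h1.
have h2 : (fun N => A n (series (Sx n) N) - P (n + 1) (G n)) @ \oo -->
    A n (stab n) - P (n + 1) (G n).
  apply: cvgB; last exact: cvg_cst.
  exact: (lin_cvg (hA n) (MA n) (hAM n) _ _ (Sx_cvg n)).
rewrite -(norm_cvg_lim h1); exact: norm_cvg_lim h2.
Qed.


Lemma unst_rec n : A n (unst n) = unst (n + 1) + (G n - P (n + 1) (G n)).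
Proof.
have h1 : series (Ux n) @ \oo --> unst n by exact: Ux_cvg.
rewrite -cvg_shiftS in h1.
have E : [sequence series (Ux n) N.+1]_N =
   (fun N => Ainv n ((G n - P (n + 1) (G n)) + series (Ux (n + 1)) N)).
  by apply/funext => N /=; rewrite series_Ux.
rewrite E in h1.
have h2 : (fun N => Ainv n ((G n - P (n + 1) (G n)) + series (Ux (n + 1)) N)) @ \oo -->
    Ainv n ((G n - P (n + 1) (G n)) + unst (n + 1)).
  apply: (lin_cvg (hAi n) (MAi n) (hAiM n)).
  apply: cvgD; first exact: cvg_cst.
  exact: Ux_cvg.
have -> : unst n = Ainv n ((G n - P (n + 1) (G n)) + unst (n + 1)).
  rewrite -(norm_cvg_lim h1); exact: norm_cvg_lim h2.
by rewrite hAA' addrC.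
Qed.

Definition zr n := stab n + unst n.

Lemma z_rec n : zr (n + 1) = A n (zr n) - G n.
Proof.
rewrite /zr stab_rec (TD (hA n)) unst_rec.
set a := A n (stab n); set p := P (n + 1) (G n); set u := unst (n + 1).
by rewrite [G n - p]addrC !addrA addrK addrAC.
Qed.

Lemma z_conv n : (fun N => series (Sx n) N + series (Ux n) N) @ \oo --> zr n.
Proof. apply: cvgD; [exact: Sx_cvg | exact: Ux_cvg]. Qed.

Lemma part_bound n N : `|series (Sx n) N + series (Ux n) N| <=
  \sum_(0 <= j < N) C * q ^+ j * (`|G (n - j%:Z - 1)| + `|G (n + j%:Z)|).
Proof.
rewrite !seriesEnat /= -big_split /=.
apply: le_trans (ler_norm_sum _ _ _) _; apply: ler_sum => j _.
rewrite mulrDr; apply: le_trans (ler_normD _ _) _.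
by apply: lerD; [exact: Sx_bound | exact: Ux_bound].
Qed.

End Exist.


Lemma geo_id k N : (1 - q) * \sum_(k <= j < k + N) q ^+ j = q ^+ k - q ^+ (k + N).
Proof.
elim: N => [|N IH]; first by rewrite addn0 big_geq // mulr0 subrr.
rewrite addnS big_nat_recr ?leq_addr //= mulrDr IH exprSr; ring.
Qed.

Lemma geo_le k N : \sum_(k <= j < k + N) q ^+ j <= q ^+ k / (1 - q).
Proof.
have hq : 0 < 1 - q by rewrite subr_gt0 q_lt1.
rewrite ler_pdivlMr // mulrC geo_id.
have := qj0 (k + N); lra.
Qed.

Lemma zr_dom (G : int -> X) : B (fun n => `|G n|) ->
  exists s, [/\ B s, (forall n, `|zr G n| <= s n) &
     normB s <= 2 * C / (1 - q) * normB (fun n => `|G n|)].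
Proof.
move=> Ba; set a := fun n => `|G n|.
have Ba' : B a := Ba.
set Ga := normB a.
have hG : forall n, `|G n| <= Ga by move=> n; have := B_sup _ n Ba'; rewrite /a normr_id.
have Ga0 : 0 <= Ga by exact: nB_ge0.
have hq : 0 < 1 - q by rewrite subr_gt0 q_lt1.
pose F (j : nat) := fun n => C * q ^+ j * (a (n + - (j%:Z + 1)) + a (n + j%:Z)).
have BF : forall j, B (F j).
  move=> j; have [B1 _] := Bshift a (- (j%:Z + 1)) Ba'; have [B2 _] := Bshift a (j%:Z) Ba'.
  exact: (BZ (C * q ^+ j) (BD B1 B2)).
have nF : forall j, normB (F j) <= 2 * C * Ga * q ^+ j.
  move=> j; have [B1 n1] := Bshift a (- (j%:Z + 1)) Ba'; have [B2 n2] := Bshift a (j%:Z) Ba'.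
  rewrite /F (nBZ _ (BD B1 B2)) ger0_norm; last by apply: mulr_ge0 (qj0 j); exact: ltW.
  apply: le_trans (ler_wpM2l _ (nBD B1 B2)) _.
    by apply: mulr_ge0 (qj0 j); exact: ltW.
  rewrite n1 n2 -/Ga.
  by have -> : C * q ^+ j * (Ga + Ga) = 2 * C * Ga * q ^+ j by ring.
pose u (N : nat) := fun n => \sum_(0 <= j < 0 + N) F j n.
have Bu : forall N, B (u N) by move=> N; exact: (proj1 (Bsum F BF 0 N)).
have nu : forall N, normB (u N) <= 2 * C * Ga / (1 - q).
  move=> N; apply: le_trans (proj2 (Bsum F BF 0 N)) _.
  apply: le_trans (ler_sum _ (fun j _ => nF j)) _.
  rewrite -mulr_sumr; apply: ler_wpM2l.
    by rewrite mulr_ge0 // mulr_ge0 // ltW.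
  by have := geo_le 0 N; rewrite expr0 mul1r.
have hu : forall k l, (k <= l)%N -> normB (fun n => u l n - u k n) <= 2 * C * Ga * q ^+ k / (1 - q).
  move=> k l kl.
  have -> : (fun n => u l n - u k n) = (fun n => \sum_(k <= j < k + (l - k)) F j n).
    apply/funext => n; rewrite /u !add0n subnKC //.
    by rewrite (big_cat_nat (leq0n k) kl) /= addrAC subrr add0r.
  apply: le_trans (proj2 (Bsum F BF k (l - k))) _.
  apply: le_trans (ler_sum _ (fun j _ => nF j)) _.
  rewrite -mulr_sumr -(mulrA (2 * C * Ga)); apply: ler_wpM2l.
    by rewrite mulr_ge0 // mulr_ge0 // ltW.
  exact: geo_le.
have hb : forall e, 0 < e -> exists N : nat, forall k, (N <= k)%N -> 2 * C * Ga * q ^+ k / (1 - q) < e.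
  move=> e he.
  have W1 : 0 < 2 * C * Ga + 1 by rewrite ltr_pwDr // !mulr_ge0 // ltW.
  have he' : 0 < e * (1 - q) / (2 * C * Ga + 1) by rewrite divr_gt0 // mulr_gt0.
  have [N HN] := q_small _ he'; exists N => k /HN hk.
  rewrite ltr_pdivrMr //; rewrite ltr_pdivlMr // in hk.
  have := qj0 k; nra.
have [s [Bs conv]] := Blim u _ Bu hu hb.
have ptw : forall n, (fun N => u N n) @ \oo --> s n.
  move=> n; apply/cvgrPdist_lt => e he.
  have [N HN] := conv e he; exists N => // k /= hk.
  rewrite distrC; apply: le_lt_trans (HN k hk).
  exact: (B_sup _ n (BB (Bu k) Bs)).
exists s; split => //.
  move=> n; apply: (ler_cvg_to (cvg_norm (z_conv _ _ hG n)) (ptw n)).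
  apply: nearW => N; apply: le_trans (part_bound G n N) _.
  rewrite /u add0n; apply: ler_sum => j _; rewrite /F /a.
  by rewrite opprD addrA.
apply/ler_addgt0Pr => e he.
have [N HN] := conv e he; have hN := HN N (leqnn N).
have Es : s = (fun n => u N n + (- (u N n - s n))).
  by apply/funext => n; rewrite opprB addrC subrK.
rewrite Es; apply: le_trans (nBD (Bu N) (BN (BB (Bu N) Bs))) _.
rewrite (nBN (BB (Bu N) Bs)).
have -> : 2 * C / (1 - q) * Ga = 2 * C * Ga / (1 - q) by rewrite mulrAC.
apply: lerD; [exact: nu | exact: ltW].
Qed.

Lemma main_all : exists L : R, 0 < L /\
    forall (eps : R) (y : int -> X), 0 < eps ->
      inXB B (fun n => y (n + 1) - A n (y n)) ->
      normXB normB (fun n => y (n + 1) - A n (y n)) <= L * eps ->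
      exists x : int -> X,
        [/\ (forall n, x (n + 1) = A n (x n)),
            inXB B (fun n => x n - y n),
            normXB normB (fun n => x n - y n) <= eps &
            (forall x' : int -> X,
               (forall n, x' (n + 1) = A n (x' n)) ->
               inXB B (fun n => x' n - y n) ->
               normXB normB (fun n => x' n - y n) <= eps ->
               x' = x)].
Proof.
have hq : 0 < 1 - q by rewrite subr_gt0 q_lt1.
exists ((1 - q) / (2 * C)); split; first by rewrite divr_gt0 // mulr_gt0.
move=> eps y he; rewrite /inXB /normXB => Ba hle.
set G := fun n => y (n + 1) - A n (y n).
have [s [Bs hs ns]] := zr_dom G Ba.
set a := normB (fun n => `|G n|).
have hG : forall n, `|G n| <= a by move=> n; have := B_sup _ n Ba; rewrite normr_id.
pose x := fun n => y n + zr G n.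
have Exy : (fun n => `|x n - y n|) = (fun n => `|zr G n|).
  by apply/funext => n; rewrite /x addrAC subrr add0r.
have xrec : forall n, x (n + 1) = A n (x n).
  move=> n; rewrite /x (z_rec _ _ hG); set z := zr G n.
  rewrite (TD (hA n) (y n) z) /G.
  by rewrite opprB addrCA [y _ + _]addrCA subrr addr0 addrC.
have [Bz nz] : B (fun n => `|zr G n|) /\ normB (fun n => `|zr G n|) <= normB s.
  apply: Bsolid Bs _ => n; rewrite normr_id; exact: le_trans (hs n) (ler_norm _).
exists x; split => //.
- by rewrite /inXB Exy.
- rewrite /normXB Exy; apply: le_trans nz _; apply: le_trans ns _.
  have K0 : 0 <= 2 * C / (1 - q) by rewrite divr_ge0 // ?mulr_ge0 // ltW.
  apply: le_trans (ler_wpM2l K0 hle) _.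
  have -> : 2 * C / (1 - q) * ((1 - q) / (2 * C) * eps) = eps.
    by field; rewrite !lt0r_neq0.
  by [].
- move=> x' hx' Bx' nx'.
  pose w := fun n => x' n - x n.
  have hw : forall n, w (n + 1) = A n (w n).
    by move=> n; rewrite /w hx' xrec (TB (hA n)).
  have hW : forall n, `|w n| <= normB (fun n => `|x' n - y n|) + normB (fun n => `|zr G n|).
    move=> n.
    have -> : w n = (x' n - y n) - (x n - y n) by rewrite opprB addrA subrK.
    apply: le_trans (ler_normB _ _) _; apply: lerD.
      by have := B_sup _ n Bx'; rewrite normr_id.
    by have := B_sup _ n Bz; rewrite normr_id /x addrAC subrr add0r.
  apply/funext => n; apply/eqP; rewrite -subr_eq0; apply/eqP.
  exact: (uniq0 _ hw _ hW n).
Qed.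

End Main.

Theorem corollary3p7 (R : realType) (X : completeNormedModType R)
  (B : set (int -> R)) (normB : (int -> R) -> R)
  (A Ainv : int -> X -> X) :
  banach_seq_space B normB ->
  admissible B normB ->
  (forall n, is_linear_op (A n)) ->
  (forall n, is_linear_op (Ainv n) /\ is_bounded_op (Ainv n)) ->
  (forall n x, Ainv n (A n x) = x) ->
  (forall n x, A n (Ainv n x) = x) ->
  (exists M : R, forall n x, `|A n x| <= M * `|x|) ->
  exp_dichotomy A Ainv ->
  exists L : R, 0 < L /\
    forall (eps : R) (y : int -> X), 0 < eps ->
      inXB B (fun n => y (n + 1) - A n (y n)) ->
      normXB normB (fun n => y (n + 1) - A n (y n)) <= L * eps ->
      exists x : int -> X,
        [/\ (forall n, x (n + 1) = A n (x n)),
            inXB B (fun n => x n - y n),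
            normXB normB (fun n => x n - y n) <= eps &
            (forall x' : int -> X,
               (forall n, x' (n + 1) = A n (x' n)) ->
               inXB B (fun n => x' n - y n) ->
               normXB normB (fun n => x' n - y n) <= eps ->
               x' = x)].
Proof.
move=> hB hadm hA hAib hAA hAA' [M hM] [P [C [lam [hPl hPA [hC hlam] hst hun]]]].
have hAi : forall n, is_linear_op (Ainv n) by move=> n; exact: (hAib n).1.
have /choice [MAi hMAi] : forall n, exists M', forall x, `|Ainv n x| <= M' * `|x|.
  by move=> n; exact: (hAib n).2.
have hP : forall n, is_linear_op (P n) by move=> n; exact: (hPl n).1.
exact: (@main_all R B normB hB hadm X A Ainv P C lam (fun _ => M) MAi hA hAi hP
  hM hMAi hAA hAA' hPA hC hlam hst hun).
Qed.
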